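(* Let $A$ be a synaptic algebra, $p,q\in P$, $r:=(p\vee q)\wedge(p\vee q^{\perp})\wedge(p^{\perp}\vee q)\wedge(p^{\perp}\vee q^{\perp})$, and let $c:=(pqp+p^{\perp}q^{\perp}p^{\perp})^{1/2}$ and $s:=(pq^{\perp}p+p^{\perp}qp^{\perp})^{1/2}$. Then: (i) $c^2=pqp+p^{\perp}q^{\perp}p^{\perp}=1-(p-q)^2=(p-q^{\perp})^2=(p+q-1)^2$; (ii) $s^2=pq^{\perp}p+p^{\perp}qp^{\perp}=(p-q)^2$; (iii) $pc^2=pqp=c^2p$, $qc^2=qpq=c^2q$, $ps^2=pq^{\perp}p=s^2p$, $qs^2=qp^{\perp}q=s^2q$, and $s^2p^{\perp}=p^{\perp}qp^{\perp}=p^{\perp}s^2$; (iv) $c=|p-q^{\perp}|$ and $s=|p-q|$; (v) $c^2+s^2=1$; (vi) $0\le c^2,s^2,c,s\le1$, $c^2\le c$ and $s^2\le s$; (vii) $C(c)=C(c^2)=C(s^2)=C(s)$; (viii) $cCp$, $cCq$, $cCr$, $sCp$, $sCq$, $sCr$ and $cCs$; (ix) $C(p)\cap C(q)\subseteq C(c)=C(s)$.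
   Context: Synaptic algebra (Foulis): $R$ is a real linear associative algebra with unit $1$, and $A\subseteq R$ is a real linear subspace with $1\in A$. For $a,b\in A$ write $aCb$ iff $ab=ba$; $C(a):=\{b\in A: aCb\}$; $CC(a):=\{b\in A: bCd \text{ for all } d\in C(a)\}$. $A$ is a synaptic algebra with enveloping algebra $R$ iff: (SA1) $A$ is a partially ordered archimedean real linear space with positive cone $A^+$, $1$ is an order unit, $\|\cdot\|$ the order-unit norm; (SA2) $a\in A\Rightarrow a^2\in A^+$; (SA3) $a,b\in A^+\Rightarrow aba\in A^+$; (SA4) if $a\in A$, $b\in A^+$, $aba=0$ then $ab=ba=0$; (SA5) if $a\in A^+$ there is $b\in A^+\cap CC(a)$ with $b^2=a$; (SA6) for $a\in A$ there is $p=p^2\in A$ with $ab=0\Leftrightarrow pb=0$ for all $b\in A$; (SA7) if $1\le a$ there is $b\in A$ with $ab=ba=1$; (SA8) if $a,b\in A$, $a_1\le a_2\le\cdots$ are pairwise commuting elements of $C(b)$ with $\|a-a_n\|\to0$, then $a\in C(b)$. $A$ is nondegenerate. $P:=\{p\in A:p=p^2\}$ with the inherited order is an orthomodular lattice with $p^{\perp}:=1-p$, meet $\wedge$, join $\vee$. For $0\le a$, $a^{1/2}$ is the unique positive square root of $a$ in $A$; $|a|:=(a^2)^{1/2}$. ($c$ and $s$ are called the cosine and sine effects of $q$ with respect to $p$.) *)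

(* Defs.v *)
(* real scalars are an abstract [realType] (complete archimedean
   ordered field, i.e. the reals); the enveloping algebra R is an [algType K]
   (real linear associative algebra with unit). *)
From HB Require Import structures.
From mathcomp Require Import all_boot all_order all_algebra.
From mathcomp Require Import boolp classical_sets reals.
From Stdlib Require Import ClassicalEpsilon.
Set Implicit Arguments. Unset Strict Implicit. Unset Printing Implicit Defensive.
Import Order.TTheory GRing.Theory Num.Theory.
Local Open Scope ring_scope.

Section Synaptic.
Variables (K : realType) (E : algType K).
(* A : the subspace A of R;  Apos : the positive cone A^+ *)
Variables (A Apos : E -> Prop).

Definition sle (a b : E) : Prop := Apos (b - a).

Definition onorm (a : E) : K :=
  inf [set l : K | 0 <= l /\ sle (- (l *: 1)) a /\ sle a (l *: 1)].

Definition Comm (a : E) : E -> Prop := fun b => A b /\ a * b = b * a.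
Definition CComm (a : E) : E -> Prop :=
  fun b => A b /\ forall d, Comm a d -> b * d = d * b.

Definition is_synaptic : Prop :=
  [/\ A 0, A 1, (forall a b, A a -> A b -> A (a + b)) &
      (forall (l : K) a, A a -> A (l *: a))] /\
  [/\ (forall a, Apos a -> A a),
      Apos 0,
      (forall a b, Apos a -> Apos b -> Apos (a + b)),
      (forall (l : K) a, 0 <= l -> Apos a -> Apos (l *: a)) &
      (forall a, Apos a -> Apos (- a) -> a = 0)] /\
  (forall a, A a -> exists l : K, sle a (l *: 1)) /\
  (forall a b, A a -> A b -> (forall n : nat, sle (n%:R *: a) b) -> sle a 0) /\
  (1 : E) <> 0 /\
  (forall a, A a -> Apos (a * a)) /\
  (forall a b, Apos a -> Apos b -> Apos (a * b * a)) /\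
  (forall a b, A a -> Apos b -> a * b * a = 0 -> a * b = 0 /\ b * a = 0) /\
  (forall a, Apos a -> exists b, Apos b /\ CComm a b /\ b * b = a) /\
  (forall a, A a -> exists p, A p /\ p * p = p /\
                  forall b, A b -> (a * b = 0 <-> p * b = 0)) /\
  (forall a, A a -> sle 1 a -> exists b, A b /\ a * b = 1 /\ b * a = 1) /\
  (forall (a b : E) (u : nat -> E), A a -> A b ->
                  (forall n, Comm b (u n)) ->
                  (forall n m, u n * u m = u m * u n) ->
                  (forall n, sle (u n) (u n.+1)) ->
                  (forall eps : K, 0 < eps -> exists N, forall n, (N <= n)%N ->
                       onorm (a - u n) < eps) ->
                  Comm b a).

Definition isProj (p : E) : Prop := A p /\ p * p = p.
Definition pcompl (p : E) : E := 1 - p.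

Local Definition inhE : inhabited E := inhabits 0.

Definition pmeet (p q : E) : E :=
  epsilon inhE (fun m => isProj m /\ sle m p /\ sle m q /\
     forall x, isProj x -> sle x p -> sle x q -> sle x m).
Definition pjoin (p q : E) : E :=
  epsilon inhE (fun m => isProj m /\ sle p m /\ sle q m /\
     forall x, isProj x -> sle p x -> sle q x -> sle m x).

(* a^{1/2}: the (unique) positive square root of a in A *)
Definition Asqrt (a : E) : E := epsilon inhE (fun b => Apos b /\ b * b = a).
Definition Aabs (a : E) : E := Asqrt (a ^+ 2).

End Synaptic.

(* Main.v *)
Require Import Defs.
From HB Require Import structures.
From mathcomp Require Import all_boot all_order all_algebra.
From mathcomp Require Import boolp classical_sets reals.
From Stdlib Require Import ClassicalEpsilon.
Set Implicit Arguments. Unset Strict Implicit. Unset Printing Implicit Defensive.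
Import Order.TTheory GRing.Theory Num.Theory.
Local Open Scope ring_scope.

Section Alg.
Variable R : pzRingType.
Variables x y : R.
Hypothesis xx : x * x = x.
Hypothesis yy : y * y = y.

Lemma sqd : (x - y)^+2 = x + y - (x*y + y*x).
Proof.
by rewrite expr2 mulrBl !mulrBr xx yy opprB opprD addrACA.
Qed.

Lemma sqd_sym : (x - y)^+2 = (y - x)^+2.
Proof. by rewrite -opprB sqrrN. Qed.

Lemma x_sqd : x * (x - y)^+2 = x - x*y*x.
Proof.
by rewrite sqd mulrBr !mulrDr xx mulrA xx opprD addrA addrK mulrA.
Qed.

Lemma sqd_x : (x - y)^+2 * x = x - x*y*x.
Proof.
by rewrite sqd mulrBl !mulrDl xx -[y*x*x]mulrA xx opprD addrA addrAC addrK.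
Qed.

Lemma xcx : x*(1-y)*x = x - x*y*x.
Proof. by rewrite mulrBr mulr1 mulrBl xx. Qed.

Lemma NY : x*(1-y)*x + (1-x)*y*(1-x) = (x-y)^+2.
Proof.
rewrite xcx sqd mulrBl mul1r !mulrBr mulr1 mulrBl opprB (addrACA y) (addrA (x - x*y*x)) (addrACA x) addNr addr0 opprD.
done.
Qed.

Lemma sand (a b c : R) : a*b*a + a*c*a = a*(b+c)*a.
Proof. by rewrite -mulrDl -mulrDr. Qed.

Lemma idc : (1 - x) * (1 - x) = 1 - x.
Proof. by rewrite mulrBr mulr1 mulrBl mul1r xx subrr subr0. Qed.

Lemma NX : x*y*x + (1-x)*(1-y)*(1-x) = 1 - (x-y)^+2.
Proof.
rewrite -NY; apply/(addIr (x*(1-y)*x + (1-x)*y*(1-x))).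
rewrite subrK addrACA !sand (addrCA y) subrr addr0 subrK !mulr1 xx idc.
by rewrite addrCA subrr addr0.
Qed.

End Alg.

Lemma idem_c (R : pzRingType) (z : R) : z * z = z -> (1 - z) * (1 - z) = 1 - z.
Proof. by move=> zz; rewrite mulrBr mulr1 mulrBl mul1r zz subrr subr0. Qed.

Lemma N2 (R : pzRingType) (x y : R) : x * x = x -> y * y = y ->
  (x - (1-y))^+2 = 1 - (x-y)^+2.
Proof.
move=> xx yy; rewrite -NX // -(NY xx (idem_c yy)) subKr //.
Qed.

Lemma zm (V: zmodType) (B P Q S : V): B - P - (B - Q - (S - P)) = Q - P + (S - P).
Proof. by rewrite opprB opprB addrA addrAC (addrC (B - P)) subrKA. Qed.

Lemma decomp (R : pzRingType) (e b : R) :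
  b - e*b*e - (1-e)*b*(1-e) = e*b*(1-e) + (1-e)*b*e.
Proof.
rewrite !mulrBr !mulr1 !mulrBl !mul1r.
exact: zm.
Qed.

Section Syn.
Variables (K : realType) (E : algType K) (A Apos : E -> Prop).
Hypothesis HA : is_synaptic A Apos.

Lemma A0 : A 0. Proof. by case: HA => -[]. Qed.
Lemma A1 : A 1. Proof. by case: HA => -[]. Qed.
Lemma AD a b : A a -> A b -> A (a + b). Proof. by case: HA => -[_ _ h _] _; apply: h. Qed.
Lemma AZ (l : K) a : A a -> A (l *: a). Proof. by case: HA => -[_ _ _ h] _; apply: h. Qed.
Lemma AN a : A a -> A (- a).
Proof. by move=> h; rewrite -scaleN1r; apply: AZ. Qed.
Lemma AB a b : A a -> A b -> A (a - b).
Proof. by move=> ha hb; apply: AD => //; apply: AN. Qed.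
Lemma PA a : Apos a -> A a. Proof. by case: HA => _ [[h _ _ _ _] _]; apply: h. Qed.
Lemma PD a b : Apos a -> Apos b -> Apos (a + b).
Proof. by case: HA => _ [[_ _ h _ _] _]; apply: h. Qed.
Lemma Pasym a : Apos a -> Apos (- a) -> a = 0.
Proof. by case: HA => _ [[_ _ _ _ h] _]; apply: h. Qed.
Lemma SA2 a : A a -> Apos (a * a).
Proof. by case: HA => _ [_ [_ [_ [_ [h _]]]]]; apply: h. Qed.
Lemma SA3 a b : Apos a -> Apos b -> Apos (a * b * a).
Proof. by case: HA => _ [_ [_ [_ [_ [_ [h _]]]]]]; apply: h. Qed.
Lemma SA4 a b : A a -> Apos b -> a * b * a = 0 -> a * b = 0 /\ b * a = 0.
Proof. by case: HA => _ [_ [_ [_ [_ [_ [_ [h _]]]]]]]; apply: h. Qed.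
Lemma SA5 a : Apos a -> exists b, Apos b /\ CComm A a b /\ b * b = a.
Proof. by case: HA => _ [_ [_ [_ [_ [_ [_ [_ [h _]]]]]]]]; apply: h. Qed.
Lemma SA6 a : A a -> exists p, A p /\ p * p = p /\ forall b, A b -> (a * b = 0 <-> p * b = 0).
Proof. by case: HA => _ [_ [_ [_ [_ [_ [_ [_ [_ [h _]]]]]]]]]; apply: h. Qed.
Lemma SA7 a : A a -> sle Apos 1 a -> exists b, A b /\ a * b = 1 /\ b * a = 1.
Proof. by case: HA => _ [_ [_ [_ [_ [_ [_ [_ [_ [_ [h _]]]]]]]]]]; apply: h. Qed.

Lemma P1 : Apos 1. Proof. by rewrite -(mulr1 1); apply: SA2; apply: A1. Qed.

Lemma sle_antisym a b : sle Apos a b -> sle Apos b a -> a = b.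
Proof.
rewrite /sle => h1 h2; apply/esym/subr0_eq/Pasym => //; by rewrite opprB.
Qed.

Lemma A0eq a : Apos a -> Apos (- a) -> a = 0.
Proof. exact: Pasym. Qed.

Lemma sum0 a b : Apos a -> Apos b -> a + b = 0 -> a = 0.
Proof.
move=> ha hb e; apply: Pasym => //.
by have -> : - a = b by apply/esym/eqP; rewrite -addr_eq0 addrC e.
Qed.

Lemma proj_pos x : isProj A x -> Apos x.
Proof. by case=> hx xx; rewrite -xx; apply: SA2. Qed.

Lemma projC x : isProj A x -> isProj A (1 - x).
Proof. by case=> hx xx; split; [apply: AB => //; apply: A1 | apply: idem_c]. Qed.

Lemma CP x y : Apos x -> Apos y -> x * y = y * x -> Apos (x * y).
Proof.
move=> hx hy xy; case: (SA5 hy) => y0 [hy0 [[_ cc] yy]].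
have h : y0 * x = x * y0.
  by apply: cc; split; [apply: PA | rewrite -xy].
by rewrite -yy mulrA -h; apply: SA3.
Qed.

Lemma AJ1 a b : A a -> A b -> A (a * b + b * a).
Proof.
move=> ha hb.
have -> : a * b + b * a = (a + b) * (a + b) - a * a - b * b.
  rewrite mulrDl !mulrDr (addrC (a*a)) addrACA.
  by rewrite -(addrA (a*b + b*a + (a*a + b*b))) -opprD addrK.
by apply: AB; [apply: AB|]; [apply: PA; apply: SA2; apply: AD| apply: PA; apply: SA2 | apply: PA; apply: SA2].
Qed.

Lemma AJ a b : A a -> A b -> A (a * b * a).
Proof.
move=> ha hb.
have h2 : A ((a * b * a) *+ 2).
  have -> : (a * b * a) *+ 2 = (a * (a * b + b * a) + (a * b + b * a) * a)
                               - (a * a * b + b * (a * a)).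
    rewrite mulrDr mulrDl !mulrA mulr2n.
    rewrite (addrC (a*a*b)) addrACA.
    by rewrite addrK.
  apply: AB; apply: AJ1 => //; [apply: AJ1 | apply: PA; apply: SA2] => //.
have -> : a * b * a = (2%:R^-1 : K) *: ((a * b * a) *+ 2).
  by rewrite -scaler_nat scalerA mulVf ?scale1r // pnatr_eq0.
exact: AZ.
Qed.


Lemma root_uniq a b b0 : Apos a -> Apos b -> b * b = a -> Apos b0 -> CComm A a b0 ->
  b0 * b0 = a -> b = b0.
Proof.
move=> ha hb bb hb0 [_ cc] b0b0.
have cb : b0 * b = b * b0.
  by apply: cc; split; [apply: PA | rewrite -bb mulrA].
set d := b - b0.
have hd : A d by apply: AB; apply: PA.
have db : d * b = b * d by rewrite /d mulrBl mulrBr cb.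
have db0 : d * b0 = b0 * d by rewrite /d mulrBl mulrBr cb.
have Q1 : Apos (d * b * d).
  rewrite -mulrA -db mulrA; apply: CP => //; first exact: SA2.
  by rewrite -mulrA db mulrA db -mulrA.
have Q2 : Apos (d * b0 * d).
  rewrite -mulrA -db0 mulrA; apply: CP => //; first exact: SA2.
  by rewrite -mulrA db0 mulrA db0 -mulrA.
have hs : d * b * d + d * b0 * d = 0.
  rewrite -mulrDl -mulrDr /d mulrBl !mulrDr bb b0b0 cb.
  by rewrite (addrC (b*b0)) subrr !mul0r addr0.
have e1 := sum0 Q1 Q2 hs.
have e2 : d * b0 * d = 0 by move: hs; rewrite e1 add0r.
case: (SA4 hd hb e1) => e1' _.
case: (SA4 hd hb0 e2) => e2' _.
have dd : d * 1 * d = 0 by rewrite mulr1 -{2}[d]/(b - b0) mulrBr e1' e2' subr0.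
case: (SA4 hd P1 dd) => d0 _.
by apply/subr0_eq; rewrite -[b - b0]/d -[d]mulr1.
Qed.

Lemma sqrt_all a : Apos a ->
  [/\ Apos (Asqrt Apos a), Asqrt Apos a * Asqrt Apos a = a & CComm A a (Asqrt Apos a)].
Proof.
move=> ha; case: (SA5 ha) => b0 [hb0 [cc bb]].
have [h1 h2] : Apos (Asqrt Apos a) /\ Asqrt Apos a * Asqrt Apos a = a.
  pose P := fun b => Apos b /\ b * b = a.
  change (P (Asqrt Apos a)).
  exact: (epsilon_spec _ P (ex_intro _ b0 (conj hb0 bb))).
by split => //; rewrite (root_uniq ha h1 h2 hb0 cc bb).
Qed.

Lemma sqrt_comm a x : Apos a -> A x -> a * x = x * a ->
  Asqrt Apos a * x = x * Asqrt Apos a.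
Proof. by move=> ha hx ax; case: (sqrt_all ha) => _ _ [_ h]; apply: h. Qed.

Lemma proj_le x y : isProj A x -> isProj A y -> sle Apos x y -> y * x = x /\ x * y = x.
Proof.
move=> px py hxy.
have [hy1 yy1] := projC py.
have hy1p : Apos (1 - y) by apply: proj_pos; apply: projC.
have hxp := proj_pos px.
have Z1 : Apos ((1 - y) * x * (1 - y)) by apply: SA3.
have Z2 : Apos (- ((1 - y) * x * (1 - y))).
  have -> : - ((1 - y) * x * (1 - y)) = (1 - y) * (y - x) * (1 - y).
    rewrite [(1-y)*(y-x)]mulrBr [(1-y)*y]mulrBl mul1r py.2 subrr sub0r.
    by rewrite mulNr.
  exact: SA3.
have Z := Pasym Z1 Z2.
case: (SA4 hy1 hxp Z) => h1 h2.
split; apply/esym/subr0_eq.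
  by move: h1; rewrite mulrBl mul1r.
by move: h2; rewrite mulrBr mulr1.
Qed.

Lemma le_proj x y : isProj A x -> isProj A y -> y * x = x -> x * y = x -> sle Apos x y.
Proof.
move=> px py yx xy; rewrite /sle.
have -> : y - x = (y - x) * (y - x).
  by rewrite mulrBl !mulrBr py.2 px.2 yx xy subrr subr0.
by apply: SA2; apply: AB; [exact: py.1 | exact: px.1].
Qed.

Lemma join_ex x y : isProj A x -> isProj A y -> exists e,
  [/\ isProj A e, sle Apos x e, sle Apos y e,
      (forall z, isProj A z -> sle Apos x z -> sle Apos y z -> sle Apos e z) &
      (forall b, A b -> b * x = x * b -> b * y = y * b -> b * e = e * b)].
Proof.
move=> px py; set a := x + y.
have ha : A a := AD px.1 py.1.
case: (SA6 ha) => e [he [ee hann]].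
have pe : isProj A e by [].
have ce : isProj A (1 - e) := projC pe.
have hce := ce.1.
have e1 : e * (1 - e) = 0 by rewrite mulrBr mulr1 ee subrr.
have a1 : a * (1 - e) = 0 by apply/(hann _ hce).
have cep := proj_pos ce.
have X1 : Apos ((1-e)*x*(1-e)) := SA3 cep (proj_pos px).
have Y1 : Apos ((1-e)*y*(1-e)) := SA3 cep (proj_pos py).
have sXY : (1-e)*x*(1-e) + (1-e)*y*(1-e) = 0.
  by rewrite -mulrDl -mulrDr -/a -mulrA a1 mulr0.
have X0 := sum0 X1 Y1 sXY.
have Y0 : (1-e)*y*(1-e) = 0 by move: sXY; rewrite X0 add0r.
case: (SA4 hce (proj_pos px) X0) => xe1 ex1.
case: (SA4 hce (proj_pos py) Y0) => ye1 ey1.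
have ex : e * x = x by apply/esym/subr0_eq; move: xe1; rewrite mulrBl mul1r.
have xe : x * e = x by apply/esym/subr0_eq; move: ex1; rewrite mulrBr mulr1.
have ey : e * y = y by apply/esym/subr0_eq; move: ye1; rewrite mulrBl mul1r.
have ye : y * e = y by apply/esym/subr0_eq; move: ey1; rewrite mulrBr mulr1.
exists e; split => //.
- exact: le_proj.
- exact: le_proj.
- move=> z pz hxz hyz.
  case: (proj_le px pz hxz) => zx xz.
  case: (proj_le py pz hyz) => zy yz.
  have hcz := (projC pz).1.
  have az : a * (1 - z) = 0 by rewrite /a mulrDl !mulrBr !mulr1 xz yz !subrr addr0.
  have ez : e * (1 - z) = 0 by apply/(hann _ hcz).
  have ez2 : (1 - z) * e * (1 - z) = 0 by rewrite -mulrA ez mulr0.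
  case: (SA4 hcz (proj_pos pe) ez2) => ze _.
  apply: le_proj => //.
    by apply/esym/subr0_eq; move: ze; rewrite mulrBl mul1r.
  by apply/esym/subr0_eq; move: ez; rewrite mulrBr mulr1.
- move=> b hb bx byy.
  have ba : b * a = a * b by rewrite /a mulrDr mulrDl bx byy.
  have ae : a * e = a by apply/esym/subr0_eq; move: a1; rewrite mulrBr mulr1.
  set m := b - e*b*e - (1-e)*b*(1-e).
  have hm : A m := AB (AB hb (AJ he hb)) (AJ hce hb).
  have am : a * m = 0.
    rewrite /m !mulrBr !mulrA ae a1 !mul0r subr0.
    by rewrite subr0 -ba -mulrA ae subrr.
  have em : e * m = 0 := (hann _ hm).1 am.
  have em' : e * b - e * b * e = 0.
    by move: em; rewrite /m !mulrBr !mulrA ee e1 !mul0r ?subr0.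
  have ebe : e * b * (1 - e) = 0 by rewrite mulrBr mulr1.
  have mdec : m = (1-e)*b*e by rewrite /m decomp ebe add0r.
  have mm : m * 1 * m = 0.
    by rewrite mulr1 mdec !mulrA -[(1-e)*b*e*(1-e)]mulrA e1 mulr0 !mul0r.
  case: (SA4 hm P1 mm) => m0 _; rewrite mulr1 mdec in m0.
  have h1 : b * e = e * b * e by apply/subr0_eq; move: m0; rewrite mulrBl mulrBl mul1r.
  have h2 : e * b = e * b * e by apply/subr0_eq.
  by rewrite h1 -h2.
Qed.

Lemma commC (b x : E) : b * x = x * b -> b * (1 - x) = (1 - x) * b.
Proof. by move=> h; rewrite mulrBr mulrBl mulr1 mul1r h. Qed.

Lemma pjoin_ok x y : isProj A x -> isProj A y ->
  let J := pjoin A Apos x y in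
  [/\ isProj A J, sle Apos x J, sle Apos y J,
      (forall z, isProj A z -> sle Apos x z -> sle Apos y z -> sle Apos J z) &
      (forall b, A b -> b * x = x * b -> b * y = y * b -> b * J = J * b)].
Proof.
move=> px py J.
case: (join_ex px py) => e [pe hx hy hmin hcomm].
pose P := fun m => isProj A m /\ sle Apos x m /\ sle Apos y m /\
     forall z, isProj A z -> sle Apos x z -> sle Apos y z -> sle Apos m z.
have : P J.
  exact: (epsilon_spec _ P (ex_intro _ e (conj pe (conj hx (conj hy hmin))))).
case=> pJ [hxJ [hyJ hminJ]].
have -> : J = e by apply: sle_antisym; [apply: hminJ | apply: hmin].
by split.
Qed.

Lemma pmeet_ok x y : isProj A x -> isProj A y ->
  let M := pmeet A Apos x y in
  isProj A M /\
      (forall b, A b -> b * x = x * b -> b * y = y * b -> b * M = M * b).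
Proof.
move=> px py M.
case: (pjoin_ok (projC px) (projC py)) => pJ hxJ hyJ hmin hcomm.
set J := pjoin A Apos (1 - x) (1 - y) in pJ hxJ hyJ hmin hcomm.
have pm : isProj A (1 - J) := projC pJ.
have hm1 : sle Apos (1 - J) x.
  by move: hxJ; rewrite /sle; have -> : x - (1 - J) = J - (1 - x) by rewrite !opprB addrCA.
have hm2 : sle Apos (1 - J) y.
  by move: hyJ; rewrite /sle; have -> : y - (1 - J) = J - (1 - y) by rewrite !opprB addrCA.
have hm3 : forall z, isProj A z -> sle Apos z x -> sle Apos z y -> sle Apos z (1 - J).
  move=> z pz hzx hzy.
  have h1 : sle Apos (1 - x) (1 - z).
    by rewrite /sle; have -> : (1 - z) - (1 - x) = x - z by rewrite opprB addrC subrKA.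
  have h2 : sle Apos (1 - y) (1 - z).
    by rewrite /sle; have -> : (1 - z) - (1 - y) = y - z by rewrite opprB addrC subrKA.
  by move: (hmin _ (projC pz) h1 h2); rewrite /sle addrAC.
pose P := fun m => isProj A m /\ sle Apos m x /\ sle Apos m y /\
     forall z, isProj A z -> sle Apos z x -> sle Apos z y -> sle Apos z m.
have : P M.
  exact: (epsilon_spec _ P (ex_intro _ (1 - J) (conj pm (conj hm1 (conj hm2 hm3))))).
case=> pM [hxM [hyM hminM]].
have -> : M = 1 - J by apply: sle_antisym; [apply: hm3 | apply: hminM].
split => // b hb bx byy.
by apply: commC; apply: hcomm => //; apply: commC.
Qed.

Lemma le1 x : Apos x -> Apos (1 - x * x) -> sle Apos x 1 /\ sle Apos (x * x) x.
Proof.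
move=> hx hxx.
have hA1 : A (1 + x) := AD A1 (PA hx).
have h1 : sle Apos 1 (1 + x) by rewrite /sle (addrC 1) addrK.
case: (SA7 hA1 h1) => g [hg [g1 g2]].
have gx : g * x = x * g.
  apply: (@addrI _ g); move: g1 g2; rewrite mulrDl mulrDr mul1r mulr1 => ->.
  by move=> ->.
have gpos : Apos g.
  have -> : g = (g * g) * (1 + x) by rewrite -mulrA g2 mulr1.
  apply: CP; [exact: SA2 | exact: PD P1 hx |].
  by rewrite -mulrA g2 mulr1 mulrA g1 mul1r.
have f : (1 + x) * (1 - x) = 1 - x * x.
  by rewrite mulrDl mul1r mulrBr mulr1 subrKA.
have e1 : 1 - x = g * (1 - x * x) by rewrite -f mulrA g2 mul1r.
have p1 : Apos (1 - x).
  rewrite e1; apply: CP => //.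
  by rewrite mulrBr mulrBl mulr1 mul1r mulrA gx -mulrA gx mulrA.
split; first by [].
rewrite /sle.
have -> : x - x * x = x * (1 - x) by rewrite mulrBr mulr1.
by apply: CP => //; apply: commC.
Qed.

Lemma cmM (x u v : E) : x * u = u * x -> x * v = v * x -> x * (u * v) = (u * v) * x.
Proof. by move=> h1 h2; rewrite mulrA h1 -mulrA h2 mulrA. Qed.
Lemma cmD (x u v : E) : x * u = u * x -> x * v = v * x -> x * (u + v) = (u + v) * x.
Proof. by move=> h1 h2; rewrite mulrDr mulrDl h1 h2. Qed.

Lemma r_comm p q b : isProj A p -> isProj A q -> A b -> b * p = p * b -> b * q = q * b ->
  let r := pmeet A Apos (pmeet A Apos (pmeet A Apos (pjoin A Apos p q)
             (pjoin A Apos p (pcompl q))) (pjoin A Apos (pcompl p) q))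
             (pjoin A Apos (pcompl p) (pcompl q)) in A r /\ b * r = r * b.
Proof.
move=> px py hb bp bq r.
have px' := projC px; have py' := projC py.
have bp' := commC bp; have bq' := commC bq.
case: (pjoin_ok px py) => p1 _ _ _ c1.
case: (pjoin_ok px py') => p2 _ _ _ c2.
case: (pjoin_ok px' py) => p3 _ _ _ c3.
case: (pjoin_ok px' py') => p4 _ _ _ c4.
have b1 := c1 b hb bp bq. have b2 := c2 b hb bp bq'.
have b3 := c3 b hb bp' bq. have b4 := c4 b hb bp' bq'.
case: (pmeet_ok p1 p2) => m1 d1.
have e1 := d1 b hb b1 b2.
case: (pmeet_ok m1 p3) => m2 d2.
have e2 := d2 b hb e1 b3.
case: (pmeet_ok m2 p4) => m3 d3.
split; first exact: m3.1.
exact: d3 b hb e2 b4.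
Qed.

End Syn.

Theorem theorem4p3 (K : realType) (E : algType K) (A Apos : E -> Prop)
  (HA : is_synaptic A Apos) (p q : E) (Hp : isProj A p) (Hq : isProj A q) :
  let pc := pcompl p in
  let qc := pcompl q in
  let r := pmeet A Apos (pmeet A Apos (pmeet A Apos (pjoin A Apos p q) (pjoin A Apos p qc))
                           (pjoin A Apos pc q)) (pjoin A Apos pc qc) in
  let c := Asqrt Apos (p * q * p + pc * qc * pc) in
  let s := Asqrt Apos (p * qc * p + pc * q * pc) in
  (* (i) *)
  [/\ c ^+ 2 = p * q * p + pc * qc * pc,
      p * q * p + pc * qc * pc = 1 - (p - q) ^+ 2,
      1 - (p - q) ^+ 2 = (p - qc) ^+ 2 &
      (p - qc) ^+ 2 = (p + q - 1) ^+ 2] /\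
  (* (ii) *)
  (s ^+ 2 = p * qc * p + pc * q * pc /\ p * qc * p + pc * q * pc = (p - q) ^+ 2) /\
  (* (iii) *)
  [/\ p * c ^+ 2 = p * q * p /\ p * q * p = c ^+ 2 * p,
      q * c ^+ 2 = q * p * q /\ q * p * q = c ^+ 2 * q,
      p * s ^+ 2 = p * qc * p /\ p * qc * p = s ^+ 2 * p,
      q * s ^+ 2 = q * pc * q /\ q * pc * q = s ^+ 2 * q &
      s ^+ 2 * pc = pc * q * pc /\ pc * q * pc = pc * s ^+ 2] /\
  (* (iv) *)
  (c = Aabs Apos (p - qc) /\ s = Aabs Apos (p - q)) /\
  (* (v) *)
  c ^+ 2 + s ^+ 2 = 1 /\
  (* (vi) *)
  [/\ sle Apos 0 (c ^+ 2) /\ sle Apos (c ^+ 2) 1,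
      sle Apos 0 (s ^+ 2) /\ sle Apos (s ^+ 2) 1,
      sle Apos 0 c /\ sle Apos c 1,
      sle Apos 0 s /\ sle Apos s 1 &
      sle Apos (c ^+ 2) c /\ sle Apos (s ^+ 2) s] /\
  (* (vii) *)
  (forall x, (Comm A c x <-> Comm A (c ^+ 2) x) /\
             (Comm A (c ^+ 2) x <-> Comm A (s ^+ 2) x) /\
             (Comm A (s ^+ 2) x <-> Comm A s x)) /\
  (* (viii) *)
  ([/\ Comm A c p, Comm A c q & Comm A c r] /\
   [/\ Comm A s p, Comm A s q & Comm A s r] /\ Comm A c s) /\
  (* (ix) *)
  ((forall x, Comm A p x -> Comm A q x -> Comm A c x) /\
   (forall x, Comm A c x <-> Comm A s x)).

Proof.
move=> pc qc r c s.
have epc : pc = 1 - p := erefl. have eqc : qc = 1 - q := erefl.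
have pp := Hp.2. have qq := Hq.2.
have hp := proj_pos HA Hp. have hq := proj_pos HA Hq.
have hpc : Apos pc := proj_pos HA (projC HA Hp).
have hqc : Apos qc := proj_pos HA (projC HA Hq).
have HX : Apos (p * q * p + pc * qc * pc) := PD HA (SA3 HA hp hq) (SA3 HA hpc hqc).
have HY : Apos (p * qc * p + pc * q * pc) := PD HA (SA3 HA hp hqc) (SA3 HA hpc hq).
have [c0 cc ccc] : [/\ Apos c, c * c = p * q * p + pc * qc * pc &
   CComm A (p * q * p + pc * qc * pc) c] := sqrt_all HA HX.
have [s0 ss sss] : [/\ Apos s, s * s = p * qc * p + pc * q * pc &
   CComm A (p * qc * p + pc * q * pc) s] := sqrt_all HA HY.
have eX : p * q * p + pc * qc * pc = 1 - (p - q)^+2 by rewrite epc eqc; exact: NX.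
have eY : p * qc * p + pc * q * pc = (p - q)^+2 by rewrite epc eqc; exact: NY.
have e2 : 1 - (p - q)^+2 = (p - qc)^+2 by rewrite eqc N2.
have c2 : c^+2 = 1 - (p - q)^+2 by rewrite expr2 cc eX.
have s2 : s^+2 = (p - q)^+2 by rewrite expr2 ss eY.
have hNY := NY pp qq.
have i1 : p * c ^+ 2 = p * q * p by rewrite c2 mulrBr mulr1 x_sqd // subKr.
have i2 : p * q * p = c ^+ 2 * p by rewrite c2 mulrBl mul1r sqd_x // subKr.
have i3 : q * c ^+ 2 = q * p * q by rewrite c2 sqd_sym mulrBr mulr1 x_sqd // subKr.
have i4 : q * p * q = c ^+ 2 * q by rewrite c2 sqd_sym mulrBl mul1r sqd_x // subKr.
have i5 : p * s ^+ 2 = p * qc * p by rewrite s2 x_sqd // eqc xcx.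
have i6 : p * qc * p = s ^+ 2 * p by rewrite s2 sqd_x // eqc xcx.
have i7 : q * s ^+ 2 = q * pc * q by rewrite s2 sqd_sym x_sqd // epc xcx.
have i8 : q * pc * q = s ^+ 2 * q by rewrite s2 sqd_sym sqd_x // epc xcx.
have i9 : s ^+ 2 * pc = pc * q * pc.
  by rewrite s2 epc mulrBr mulr1 sqd_x // -{1}hNY xcx // (addrC (p - p * q * p)) addrK.
have i10 : pc * q * pc = pc * s ^+ 2.
  by rewrite s2 epc [(1 - p) * _ ^+ 2]mulrBl mul1r x_sqd // -{1}hNY xcx // (addrC (p - p * q * p)) addrK.
have cs : c ^+ 2 + s ^+ 2 = 1 by rewrite c2 s2 subrK.
have sc1 : 1 - c ^+ 2 = s ^+ 2 by rewrite -cs addrC addKr.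
have cs1 : 1 - s ^+ 2 = c ^+ 2 by rewrite -cs addrK.
have cX x : Comm A (c ^+ 2) x -> c * x = x * c.
  by case=> hx h; apply: ccc.2; split => //; rewrite -cc -expr2.
have sY x : Comm A (s ^+ 2) x -> s * x = x * s.
  by case=> hx h; apply: sss.2; split => //; rewrite -ss -expr2.
have hc : A c := PA HA c0. have hs : A s := PA HA s0.
have C12 x : Comm A c x <-> Comm A (c ^+ 2) x.
  split; last by move=> h; split; [exact: h.1 | exact: cX].
  by case=> hx h; split => //; rewrite expr2 -mulrA h mulrA h -mulrA.
have C34 x : Comm A (s ^+ 2) x <-> Comm A s x.
  split; first by move=> h; split; [exact: h.1 | exact: sY].
  by case=> hx h; split => //; rewrite expr2 -mulrA h mulrA h -mulrA.
have C23 x : Comm A (c ^+ 2) x <-> Comm A (s ^+ 2) x.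
  split; case=> hx h; split => //.
    by rewrite -sc1; apply/esym/commC; rewrite h.
  by rewrite -cs1; apply/esym/commC; rewrite h.
have Ccs x : Comm A c x <-> Comm A s x.
  by rewrite C12 C23 C34.
have cp : Comm A c p by apply/C12; split; [exact: Hp.1 | rewrite -i2 i1].
have cq : Comm A c q by apply/C12; split; [exact: Hq.1 | rewrite -i4 i3].
have sp : Comm A s p by apply/C34; split; [exact: Hp.1 | rewrite -i6 i5].
have sq : Comm A s q by apply/C34; split; [exact: Hq.1 | rewrite -i8 i7].
have [hr cr] : A r /\ c * r = r * c := r_comm HA Hp Hq hc cp.2 cq.2.
have [_ sr] : A r /\ s * r = r * s := r_comm HA Hp Hq hs sp.2 sq.2.
have hcs : Comm A c s.
  apply/C12; split => //; rewrite -cs1 -commC //.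
  by rewrite expr2 mulrA.
have [l1 l2] : sle Apos c 1 /\ sle Apos (c * c) c.
  by apply: (le1 HA) => //; rewrite -expr2 sc1 expr2; exact: (SA2 HA hs).
have [l3 l4] : sle Apos s 1 /\ sle Apos (s * s) s.
  by apply: (le1 HA) => //; rewrite -expr2 cs1 expr2; exact: (SA2 HA hc).
split.
  split => //.
  by rewrite eqc opprB addrA.
split; first by split; [rewrite expr2 | ].
split; first by split.
split.
  split; first by rewrite /Aabs -e2 -eX.
  by rewrite /Aabs -eY.
split; first exact: cs.
split.
  split; split; rewrite /sle ?subr0 ?sc1 ?cs1 ?expr2 //; try exact: (SA2 HA hc); try exact: (SA2 HA hs).
split; first by move=> x; split; [exact: C12 | split; [exact: C23 | exact: C34]].
split.
  split; first by split.
  split; first by split.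
  exact: hcs.
split => // x [hx px] [_ qx].
apply/C12; split => //.
rewrite c2 -eX epc eqc.
have xp : x * p = p * x := esym px. have xq : x * q = q * x := esym qx.
have xpc := commC xp. have xqc := commC xq.
apply/esym; apply: cmD; (apply: cmM; [apply: cmM|]) => //.
Qed.
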